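(* Let $K$ be a field of characteristic $p>0$ such that $K/k$ is a finitely generated field extension, where $k=\bigcap_{n\ge0}K^{p^n}$. Let $W_\bullet$ be a power tower on $K$. Then \[\dim_{W_1}(K)\ge\dim_{W_2}(W_1)\ge\cdots\ge\dim_{W_n}(W_{n-1})\ge\cdots\ge0.\]
   Context: A power tower on $K$ is a sequence of subfields $W_0,W_1,W_2,\ldots$ of $K$ such that $W_j=W_i\cdot K^{p^j}$ whenever $j\le i$, where $\cdot$ denotes the compositum in $K$. *)

(* Defs.v *)
From HB Require Import structures.
From mathcomp Require Import all_boot all_order all_algebra.
Set Implicit Arguments. Unset Strict Implicit. Unset Printing Implicit Defensive.
Import GRing.Theory.
Local Open Scope ring_scope.

Definition is_subfield (K : fieldType) (S : K -> Prop) : Prop :=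
  [/\ S 0, S 1,
      (forall x y, S x -> S y -> S (x - y)),
      (forall x y, S x -> S y -> S (x * y)) &
      (forall x, S x -> S x^-1)].

Definition gen_subfield (K : fieldType) (A : K -> Prop) : K -> Prop :=
  fun x => forall S, is_subfield S -> (forall y, A y -> S y) -> S x.

Definition compositum (K : fieldType) (A B : K -> Prop) : K -> Prop :=
  gen_subfield (fun x => A x \/ B x).

Definition frob_pow_image (K : fieldType) (p n : nat) : K -> Prop :=
  fun x => exists y : K, x = y ^+ (p ^ n).

Definition perfect_core (K : fieldType) (p : nat) : K -> Prop :=
  fun x => forall n, frob_pow_image p n x.

Definition fin_gen_over (K : fieldType) (F : K -> Prop) : Prop :=
  exists s : seq K, forall x : K, gen_subfield (fun y => F y \/ y \in s) x.

Definition power_tower (K : fieldType) (p : nat) (W : nat -> K -> Prop) : Prop :=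
  (forall i, is_subfield (W i)) /\
  (forall i j, (j <= i)%N ->
     forall x, W j x <-> compositum (W i) (frob_pow_image p j) x).

Definition has_dim (K : fieldType) (W V : K -> Prop) (d : nat) : Prop :=
  exists b : 'I_d -> K,
    [/\ (forall i, V (b i)),
        (forall c : 'I_d -> K, (forall i, W (c i)) ->
            \sum_i c i * b i = 0 -> forall i, c i = 0) &
        (forall x, V x -> exists c : 'I_d -> K,
            (forall i, W (c i)) /\ x = \sum_i c i * b i)].

(* Main.v *)
Require Import Defs.
From HB Require Import structures.
From mathcomp Require Import all_boot all_order all_algebra.
From Stdlib Require Import Classical.
Set Implicit Arguments. Unset Strict Implicit. Unset Printing Implicit Defensive.
Import GRing.Theory.
Local Open Scope ring_scope.

Section Gen.
Variable K : fieldType.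
Implicit Types S F : K -> Prop.

Lemma sf0 S : is_subfield S -> S 0. Proof. by case. Qed.
Lemma sf1 S : is_subfield S -> S 1. Proof. by case. Qed.
Lemma sfB S x y : is_subfield S -> S x -> S y -> S (x - y). Proof. by case=> _ _ h _ _; apply: h. Qed.
Lemma sfM S x y : is_subfield S -> S x -> S y -> S (x * y). Proof. by case=> _ _ _ h _; apply: h. Qed.
Lemma sfV S x : is_subfield S -> S x -> S x^-1. Proof. by case=> _ _ _ _ h; apply: h. Qed.
Lemma sfN S x : is_subfield S -> S x -> S (- x).
Proof. by move=> hS hx; rewrite -sub0r; apply: sfB => //; apply: sf0. Qed.
Lemma sfD S x y : is_subfield S -> S x -> S y -> S (x + y).
Proof. by move=> hS hx hy; rewrite -(opprK y); apply: sfB => //; apply: sfN. Qed.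
Lemma sfX S x n : is_subfield S -> S x -> S (x ^+ n).
Proof. by move=> hS hx; elim: n => [|n IH]; [rewrite expr0; apply: sf1|rewrite exprS; apply: sfM]. Qed.
Lemma sf_sum S (J : Type) (r : seq J) (P : pred J) (f : J -> K) : is_subfield S ->
  (forall j, P j -> S (f j)) -> S (\sum_(j <- r | P j) f j).
Proof. by move=> hS h; apply: big_ind => //; [apply: sf0 | move=> x y; apply: sfD]. Qed.

Definition Sp F (I : finType) (b : I -> K) (x : K) :=
  exists c : I -> K, (forall i, F (c i)) /\ x = \sum_i c i * b i.

Section SpTh.
Variables (F : K -> Prop) (hF : is_subfield F) (I : finType) (b : I -> K).

Lemma Sp0 : Sp F b 0.
Proof. exists (fun _ => 0); split=> [i|]; first exact: sf0. by rewrite big1 // => i _; rewrite mul0r. Qed.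
Lemma SpD x y : Sp F b x -> Sp F b y -> Sp F b (x + y).
Proof.
case=> c [hc ->] [e [he ->]]; exists (fun i => c i + e i); split=> [i|]; first exact: sfD.
by rewrite -big_split /=; apply: eq_bigr => i _; rewrite mulrDl.
Qed.
Lemma SpZ a x : F a -> Sp F b x -> Sp F b (a * x).
Proof.
move=> ha [c [hc ->]]; exists (fun i => a * c i); split=> [i|]; first exact: sfM.
by rewrite mulr_sumr; apply: eq_bigr => i _; rewrite mulrA.
Qed.
Lemma SpN x : Sp F b x -> Sp F b (- x).
Proof. by move=> h; rewrite -mulN1r; apply: SpZ => //; apply: sfN => //; apply: sf1. Qed.
Lemma Sp_b i : Sp F b (b i).
Proof.
exists (fun j => if j == i then 1 else 0); split=> [j|]; first by case: eqP => _; [apply: sf1|apply: sf0].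
rewrite (bigD1 i) //= eqxx mul1r big1 ?addr0 // => j /negbTE ->; by rewrite mul0r.
Qed.
Lemma Sp_sum (J : Type) (r : seq J) (P : pred J) (f : J -> K) :
  (forall j, P j -> Sp F b (f j)) -> Sp F b (\sum_(j <- r | P j) f j).
Proof. by move=> h; apply: big_ind => //; [apply: Sp0 | move=> x y; apply: SpD]. Qed.
Lemma Sp_mul : (forall k l, Sp F b (b k * b l)) ->
  forall x y, Sp F b x -> Sp F b y -> Sp F b (x * y).
Proof.
move=> hb x y [c [hc ->]] [e [he ->]]; rewrite mulr_suml; apply: Sp_sum => k _.
rewrite mulr_sumr; apply: Sp_sum => l _; rewrite mulrACA; exact: SpZ (sfM hF (hc k) (he l)) (hb k l).
Qed.
Lemma Sp_F a : Sp F b 1 -> F a -> Sp F b a.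
Proof. by move=> h1 ha; rewrite -(mulr1 a); apply: SpZ. Qed.

Lemma Sp_subfield p : (0 < p)%N -> Sp F b 1 -> (forall k l, Sp F b (b k * b l)) ->
  (forall x, Sp F b x -> F (x ^+ p)) -> is_subfield (Sp F b).
Proof.
move=> p0 h1 hb hp; split=> //.
- exact: Sp0.
- by move=> x y hx hy; apply: SpD => //; apply: SpN.
- exact: Sp_mul.
move=> x hx; have [->|x0] := eqVneq x 0; first by rewrite invr0; apply: Sp0.
have hX n : Sp F b (x ^+ n).
  by elim: n => [|n IH]; [rewrite expr0 | rewrite exprS; apply: Sp_mul].
case: p p0 hp => // q _ hp.
have -> : x^-1 = (x ^+ q.+1)^-1 * x ^+ q.
  by rewrite exprS invfM mulfVK // expf_neq0.
apply: SpZ; last exact: hX.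
by apply: sfV => //; apply: hp.
Qed.

End SpTh.

Lemma Sp_ord F (I : finType) (b : I -> K) x : Sp F b x ->
  Sp F (fun i : 'I_#|I| => b (enum_val i)) x.
Proof.
case=> c [hc ->]; exists (fun i => c (enum_val i)); split=> // .
by rewrite (big_enum_val (A := predT)).
Qed.

End Gen.

Lemma extract (K : fieldType) (F V : K -> Prop) : is_subfield F ->
  forall d (b : 'I_d -> K), (forall i, V (b i)) -> (forall x, V x -> Sp F b x) ->
  exists d', (d' <= d)%N /\ has_dim F V d'.
Proof.
move=> hF; elim=> [|d IH] b hV hS.
  exists 0%N; split=> //; exists b; split=> // c _ _ [] //.
have [ind|nind] := classic (forall c : 'I_d.+1 -> K, (forall i, F (c i)) ->
            \sum_i c i * b i = 0 -> forall i, c i = 0).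
  by exists d.+1; split=> //; exists b; split.
have [c hc] := not_all_ex_not _ _ nind.
have [Fc hc'] := imply_to_and _ _ hc.
have [s0 hc''] := imply_to_and _ _ hc'.
have [i ci] := not_all_ex_not _ _ hc''.
pose b' := fun j : 'I_d => b (lift i j).
have Sbi : Sp F b' (b i).
  move: s0; rewrite (bigD1_ord i) //= => /eqP; rewrite addr_eq0 => /eqP h.
  have -> : b i = (c i)^-1 * (c i * b i) by rewrite mulKf //; apply/eqP.
  rewrite h; apply: SpZ => //; first exact: sfV.
  apply: SpN => //; apply: Sp_sum => // j _; apply: SpZ => //; exact: Sp_b.
have hS' : forall x, V x -> Sp F b' x.
  move=> x /hS [e [he ->]]; rewrite (bigD1_ord i) //=.
  apply: SpD => //; first by apply: SpZ.
  apply: Sp_sum => // j _; apply: SpZ => //; exact: Sp_b.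
have [d' [led hd]] := IH b' (fun j => hV _) hS'.
by exists d'; split=> //; apply: leqW.
Qed.

Lemma mono (K : fieldType) (F : K -> Prop) (hF : is_subfield F) p (p0 : (0 < p)%N)
  (hp : forall y, F (y ^+ p)) (s : seq K) :
  exists (I : finType) (b : I -> K),
    [/\ Sp F b 1, (forall a, a \in s -> Sp F b a) & forall k l, Sp F b (b k * b l)].
Proof.
elim: s => [|a s [I [b [h1 hs hb]]]].
  exists unit, (fun _ => 1); split=> //; first exact: (Sp_b hF (fun _ : unit => 1) tt).
  by move=> k l; rewrite mulr1; exact: (Sp_b hF (fun _ : unit => 1) tt).
pose b' := fun ij : 'I_p * I => a ^+ ij.1 * b ij.2.
have key n y : Sp F b y -> Sp F b' (a ^+ n * y).
  move=> hy; rewrite (divn_eq n p) exprD mulnC exprM -mulrA mulrCA.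
  have : Sp F b ((a ^+ p) ^+ (n %/ p) * y) by apply: SpZ => //; apply: sfX.
  case=> c [hc ->]; rewrite mulr_sumr; apply: Sp_sum => // j _.
  rewrite mulrCA; apply: SpZ => //.
  exact: (Sp_b hF b' (Ordinal (ltn_pmod n p0), j)).
exists (prod (ordinal p) I : finType); exists b'; split.
- by rewrite -(mulr1 1) -{1}(expr0 a); apply: key.
- move=> a'; rewrite in_cons => /orP [/eqP ->|ha].
    by rewrite -(mulr1 a) -{1}(expr1 a); apply: key.
  by rewrite -(mul1r a') -(expr0 a); apply: key; apply: hs.
- by move=> [i j] [k l]; rewrite /b' /= mulrACA -exprD; apply: key.
Qed.

Section PT.
Variables (K : fieldType) (p : nat) (W : nat -> K -> Prop).
Hypothesis chK : p \in [pchar K].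
Hypothesis PT : power_tower p W.

Lemma p_gt0 : (0 < p)%N.
Proof. exact: prime_gt0 (pcharf_prime chK). Qed.

Lemma frobB (x y : K) : (x - y) ^+ p = x ^+ p - y ^+ p.
Proof. by rewrite -!(pFrobenius_autE chK) rmorphB. Qed.

Lemma frob_sum (I : finType) (f : I -> K) : (\sum_i f i) ^+ p = \sum_i f i ^+ p.
Proof. by rewrite -(pFrobenius_autE chK) rmorph_sum. Qed.

Lemma Wsf i : is_subfield (W i). Proof. exact: PT.1. Qed.

Lemma PT_sub i x : W i.+1 x -> W i x.
Proof. by move=> hx; apply: (PT.2 i.+1 i (leqnSn i) x).2 => S hS h; apply: h; left. Qed.

Lemma PT_frob i x : frob_pow_image p i x -> W i x.
Proof. by move=> hx; apply: (PT.2 i i (leqnn i) x).2 => S hS h; apply: h; right. Qed.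

Lemma PT_all0 x : W 0 x.
Proof. by apply: PT_frob; exists x; rewrite expn0 expr1. Qed.

Lemma PT_pow i x : W i x -> W i.+1 (x ^+ p).
Proof.
move=> hx; have h := (PT.2 i.+1 i (leqnSn i) x).1 hx.
apply: (h (fun y => W i.+1 (y ^+ p))); [split| move=> y [hy|[z ->]]].
- by rewrite expr0n gtn_eqF ?p_gt0 //; apply: sf0 (Wsf _).
- by rewrite expr1n; apply: sf1 (Wsf _).
- by move=> a b ha hb; rewrite frobB; apply: sfB (Wsf _) _ _.
- by move=> a b ha hb; rewrite exprMn; apply: sfM (Wsf _) _ _.
- by move=> a ha; rewrite exprVn; apply: sfV (Wsf _) _.
- exact: sfX (Wsf _) hy.
- by apply: PT_frob; exists z; rewrite -exprM expnSr.
Qed.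

Lemma transfer n d (b : 'I_d -> K) : (forall i, W n (b i)) ->
  (forall x, W n x -> Sp (W n.+1) b x) ->
  (forall i, W n.+1 (b i ^+ p)) /\
  (forall x, W n.+1 x -> Sp (W n.+2) (fun i => b i ^+ p) x).
Proof.
move=> hb hS; split=> [i|]; first exact: PT_pow.
pose b' := fun i => b i ^+ p.
have frobSp y : W n y -> Sp (W n.+2) b' (y ^+ p).
  move=> /hS [c [hc ->]]; rewrite frob_sum; exists (fun i => c i ^+ p); split.
    by move=> i; apply: PT_pow.
  by apply: eq_bigr => i _; rewrite exprMn.
have hsub : is_subfield (Sp (W n.+2) b').
  apply: (Sp_subfield (Wsf _) p_gt0).
  - by rewrite -(expr1n _ p); apply: frobSp; apply: sf1 (Wsf _).
  - by move=> k l; rewrite /b' -exprMn; apply: frobSp; apply: sfM (Wsf _) _ _.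
  move=> x [c [hc ->]]; apply: PT_pow; apply: sf_sum (Wsf _) _ => i _.
  by apply: sfM (Wsf _) _ _; [apply: PT_sub | apply: PT_pow].
move=> x hx; have h := (PT.2 n.+2 n.+1 (leqnSn _) x).1 hx.
apply: (h _ hsub) => y [hy|[z ->]].
  apply: (Sp_F (Wsf _) _ hy); rewrite -(expr1n _ p); apply: frobSp; apply: sf1 (Wsf _).
rewrite expnSr exprM; apply: frobSp; apply: PT_frob; by exists z.
Qed.

Lemma base : fin_gen_over (perfect_core (K:=K) p) ->
  exists d (b : 'I_d -> K), forall x, Sp (W 1) b x.
Proof.
case=> s hs.
have hp y : W 1 (y ^+ p) by apply: PT_frob; exists y; rewrite expn1.
have [I [b [h1 hsb hbb]]] := mono (Wsf 1) p_gt0 hp s.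
have hsub : is_subfield (Sp (W 1) b).
  by apply: (Sp_subfield (Wsf _) p_gt0) => // x _.
exists #|I|, (fun i => b (enum_val i)) => x; apply: Sp_ord.
apply: (hs x _ hsub) => y [hy|hy]; last exact: hsb.
apply: (Sp_F (Wsf _) h1); have [w ->] := hy 1%N; rewrite expn1; exact: hp.
Qed.
End PT.

Local Close Scope ring_scope.

Theorem mainTheorem7 (K : fieldType) (p : nat) (W : nat -> K -> Prop) :
  (p \in [pchar K])%R ->
  fin_gen_over (perfect_core (K:=K) p) ->
  power_tower p W ->
  forall n : nat, exists d1 d2 : nat,
    [/\ has_dim (W n.+1) (W n) d1,
        has_dim (W n.+2) (W n.+1) d2 &
        (d2 <= d1)%N].
Proof.
move=> chK hfg PT.
have span n : exists d (b : 'I_d -> K), (forall i, W n (b i)) /\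
    (forall x, W n x -> Sp (W n.+1) b x).
  elim: n => [|n [d [b [hb hS]]]].
    have [d [b hb]] := base chK PT hfg.
    exists d, b. split=> // i; apply: (PT_all0 PT).
  have [h1 h2] := transfer chK PT hb hS.
  by exists d, (fun i => (b i ^+ p)%R); split.
move=> n; have [d [b [hb hS]]] := span n.
have [d1 [_ hd1]] := extract (Wsf PT n.+1) hb hS.
have [e [he1 he2 he3]] := hd1.
have [h1 h2] := transfer chK PT he1 he3.
have [d2 [le hd2]] := extract (Wsf PT n.+2) h1 h2.
by exists d1, d2; split.
Qed.
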